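(* Let $h\ge0$, let $m\in U$ and let $(u_{\alpha,\beta})_{\alpha+\beta\le h}$ be an element of $R_h$ at $m$. Put $v^{(k)}:=u_{0,k}$ for $0\le k\le h$. Then the whole element is determined by $v^{(0)},\dots,v^{(h)}$; more precisely, for all $\alpha+\beta\le h$, $$u_{\alpha,\beta}=\sum_{k=0}^{\alpha+\beta}E^k_{\alpha,\beta}\,v^{(k)},$$ where the $(d-2)\times(d-2)$ matrices $E^k_{\alpha,\beta}$ depend only on $M$ and its partial derivatives and are determined by $E^k_{0,k}=\mathrm{Id}_{d-2}$, $E^{h'}_{0,k}=0$ for $h'<k$, the convention $E^{h'}_{\gamma,\delta}=0$ if $h'>\gamma+\delta$, and the recursion (on $\alpha+\beta$, then on $\alpha$ for fixed $\alpha+\beta$) $$E^{h'}_{\alpha+1,\beta}=-(J_0I^0)\,E^{h'}_{\alpha,\beta+1}+\sum_{\gamma=0}^{\alpha}\sum_{\delta=0}^{\beta}(J_0M^{\gamma,\delta}_{\alpha,\beta})\,E^{h'}_{\gamma,\delta}.$$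
   Context: Let $d\ge 3$, $U\subset\mathbb{C}^2$ open with coordinates $(x,y)$, and let $M$ be the $(d-1)\times(d-2)$ matrix of holomorphic functions on $U$ defined as follows. Let $F(x,y,p)=\sum_{i=0}^d a_i(x,y)p^{d-i}$, $a_i$ holomorphic, $a_0\equiv1$, with $F=\prod_{i=1}^d(p-p_i(x,y))$, the $p_i$ holomorphic and pairwise distinct at every point. A polynomial $P=\sum_{i=0}^kg_ip^i$ is identified with $(g_0,\dots,g_k)^T$; $M(P)$ is the $(h+k+1)\times(h+1)$ multiplication matrix with $0$-based entry $(i,j)$ equal to $g_{i-j}$ if $0\le i-j\le k$, else $0$. Put $K=F'_x+pF'_y$, $H=KF''_{pp}-K'_pF'_p$, $L=KF'_p$; take $M(F)$ of size $(3d-3)\times(2d-3)$, $M((F'_p)^2)$ of size $(3d-3)\times(d-1)$, $M(L),M(H)$ of size $(3d-3)\times(d-2)$. For a matrix $X$ with $3d-3$ rows, $X^+$ (resp. $X^-$) is the submatrix of its first $d$ (resp. last $2d-3$) rows. $N$ is the $(d-2)\times(d-2)$ matrix with only nonzero entries $N_{j,j+1}=j$ ($1\le j\le d-3$, 1-based). $B=M^+((F'_p)^2)-M^+(F)(M^-(F))^{-1}M^-((F'_p)^2)$ (rank $d-1$), $E=(M^+(H)-M^+(L)N)-M^+(F)(M^-(F))^{-1}(M^-(H)-M^-(L)N)$, $T$ a left inverse of $B$, and $M=-TE$. $I_0$ (resp. $I^0$) is the $(d-1)\times(d-2)$ matrix formed by $\mathrm{Id}_{d-2}$ followed by (resp.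 preceded by) a zero row. $J_0$ is the $(d-2)\times(d-1)$ matrix obtained by adding a column of zeros to the right of $\mathrm{Id}_{d-2}$. $M'_{a,b}$ denotes $\partial^{a+b}M/\partial x^a\partial y^b$ and $M^{\gamma,\delta}_{\alpha,\beta}:=\binom{\alpha}{\gamma}\binom{\beta}{\delta}M'_{\alpha-\gamma,\beta-\delta}$. $R_h$ (formal abelian relations of order $h$): its fiber at $m\in U$ is the set of families $(u_{\alpha,\beta})_{\alpha+\beta\le h}$ of vectors in $\mathbb{C}^{d-2}$ such that for all $\alpha,\beta\ge0$ with $\alpha+\beta\le h-1$: $$I_0u_{\alpha+1,\beta}+I^0u_{\alpha,\beta+1}=\sum_{\gamma=0}^\alpha\sum_{\delta=0}^\beta M^{\gamma,\delta}_{\alpha,\beta}(m)\,u_{\gamma,\delta}$$ (the equations obtained by differentiating $\alpha$ times in $x$ and $\beta$ times in $y$ the system $I_0r'_x+I^0r'_y=Mr$). *)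

(* Defs.v *)
From HB Require Import structures.
From mathcomp Require Import all_boot all_order all_algebra.
From mathcomp Require Import complex.
From mathcomp Require Import all_classical all_reals all_analysis.
Set Implicit Arguments. Unset Strict Implicit. Unset Printing Implicit Defensive.
Import Order.TTheory GRing.Theory Num.Theory.
Import numFieldNormedType.Exports.
Local Open Scope ring_scope.

(* The complex numbers over R, seen as a numClosedFieldType so that the
   generic normed-module structure (numFieldNormedType) applies. *)
Definition Cplx (R : realType) : numClosedFieldType := R[i].

Section Defs.
Variable R : realType.
Local Notation C := (Cplx R).

Definition pdx (f : C -> C -> C) : C -> C -> C :=
  fun x y => derive1 (fun t : C => f t y) x.
Definition pdy (f : C -> C -> C) : C -> C -> C :=
  fun x y => derive1 (fun t : C => f x t) y.

Definition pder (a b : nat) (f : C -> C -> C) : C -> C -> C :=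
  iter a pdx (iter b pdy f).

Variable n : nat. (* n = d - 2, so d - 1 = n.+1 *)

Definition Mder (M : C -> C -> 'M[C]_(n.+1, n)) (a b : nat) (x0 y0 : C)
  : 'M[C]_(n.+1, n) :=
  \matrix_(i, j) pder a b (fun x y => M x y i j) x0 y0.

Definition Mbin (M : C -> C -> 'M[C]_(n.+1, n)) (x0 y0 : C)
  (al be ga de : nat) : 'M[C]_(n.+1, n) :=
  ('C(al, ga) * 'C(be, de))%:R *: Mder M (al - ga) (be - de) x0 y0.

Definition Ilow0 : 'M[C]_(n.+1, n) := \matrix_(i, j) ((i : nat) == j)%:R.
Definition Iup0 : 'M[C]_(n.+1, n) := \matrix_(i, j) ((i : nat) == j.+1)%:R.
Definition J0 : 'M[C]_(n, n.+1) := \matrix_(i, j) ((i : nat) == j)%:R.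

(* Fiber at m = (x0, y0) of R_h: formal abelian relations of order h. *)
Definition in_Rh (M : C -> C -> 'M[C]_(n.+1, n)) (h : nat) (x0 y0 : C)
  (u : nat -> nat -> 'cV[C]_n) : Prop :=
  forall al be : nat, (al + be < h)%N ->
    Ilow0 *m u al.+1 be + Iup0 *m u al be.+1 =
    \sum_(ga < al.+1) \sum_(de < be.+1) Mbin M x0 y0 al be ga de *m u ga de.

(* Table of E^{h'}_{gamma,delta} for gamma <= a, built by the recursion. *)
Fixpoint Etab (M : C -> C -> 'M[C]_(n.+1, n)) (x0 y0 : C) (h' : nat) (a : nat)
  : nat -> nat -> 'M[C]_n :=
  match a with
  | 0 => fun _ de => ((h' == de)%N)%:R%:M
  | a'.+1 => let T := Etab M x0 y0 h' a' in
      fun ga be =>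
        if (ga <= a')%N then T ga be
        else if (a'.+1 + be < h')%N then 0
        else - (J0 *m Iup0) *m T a' be.+1
             + \sum_(g < a'.+1) \sum_(de < be.+1)
                  (J0 *m Mbin M x0 y0 a' be g de) *m T g de
  end.

Definition Emat (M : C -> C -> 'M[C]_(n.+1, n)) (x0 y0 : C) (h' al be : nat)
  : 'M[C]_n :=
  if (al + be < h')%N then 0 else Etab M x0 y0 h' al al be.

End Defs.

(* Main.v *)
Require Import Defs.
From HB Require Import structures.
From mathcomp Require Import all_boot all_order all_algebra.
From mathcomp Require Import complex.
From mathcomp Require Import all_classical all_reals all_analysis.
Import numFieldNormedType.Exports.
Import GRing.Theory.
Local Open Scope ring_scope.
Local Open Scope classical_set_scope.

Section Aux.
Variables (R : realType) (n : nat) (M : Cplx R -> Cplx R -> 'M[Cplx R]_(n.+1, n)) (x0 y0 : Cplx R).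

Local Notation E h' g de := (Etab M x0 y0 h' g g de).

Lemma Etab_stable a ga be h' : (ga <= a)%N ->
  Etab M x0 y0 h' a ga be = E h' ga be.
Proof.
elim: a ga => [|a IH] ga.
  by rewrite leqn0 => /eqP ->.
rewrite leq_eqVlt => /orP [/eqP -> //|]; rewrite ltnS => Hga.
by rewrite /= Hga IH.
Qed.

Lemma Etab_succ a be h' : E h' a.+1 be =
  if (a.+1 + be < h')%N then 0
  else - (J0 R n *m Iup0 R n) *m E h' a be.+1
       + \sum_(g < a.+1) \sum_(de < be.+1)
            (J0 R n *m Mbin M x0 y0 a be g de) *m E h' g de.
Proof.
rewrite /= ltnn; case: ifP => // _.
congr (_ + _).
apply: eq_bigr => g _; apply: eq_bigr => de _.
by rewrite Etab_stable // -ltnS.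
Qed.

Lemma E_zero h' g de : (g + de < h')%N -> E h' g de = 0.
Proof.
case: g => [|a] H.
  move: H; rewrite add0n => H.
  have Hf : (h' == de) = false by rewrite eq_sym ltn_eqF.
  rewrite [Etab _ _ _ _ _ _ _]/= Hf.
  by rewrite /= (raddf0 (@scalar_mx _ n)).
by rewrite Etab_succ H.
Qed.

Lemma J0Ilow0 : J0 R n *m Ilow0 R n = 1%:M :> 'M[Cplx R]_n.
Proof.
apply/matrixP => i j; rewrite !mxE.
rewrite (bigD1 (widen_ord (leqnSn n) i)) //= big1 ?addr0.
  rewrite !mxE /= eqxx mul1r; by [].
move=> k /eqP Hk; rewrite !mxE.
case: eqP => [Hik|]; last by rewrite mul0r.
by exfalso; apply: Hk; apply: val_inj; rewrite /= Hik.
Qed.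

End Aux.

(* d = n.+2, so d >= 3 iff n >= 1; m = (x0, y0). *)
Theorem theorem2 (R : realType) (n : nat) (hn : (1 <= n)%N)
  (U : set (Cplx R * Cplx R)) (hU : open U)
  (M : Cplx R -> Cplx R -> 'M[Cplx R]_(n.+1, n))
  (h : nat) (x0 y0 : Cplx R) (hm : U (x0, y0))
  (u : nat -> nat -> 'cV[Cplx R]_n) (hu : in_Rh M h x0 y0 u) :
  forall al be : nat, (al + be <= h)%N ->
    u al be = \sum_(k < (al + be).+1) Emat M x0 y0 k al be *m u 0%N k.
Proof.
have EE : forall k al be, (k <= al + be)%N -> Emat M x0 y0 k al be = Etab M x0 y0 k al al be.
  by move=> k al be H; rewrite /Emat ltnNge H.
have widen : forall g de N, (g + de < N)%N ->
   \sum_(k < (g + de).+1) Etab M x0 y0 k g g de *m u 0%N k =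
   \sum_(k < N) Etab M x0 y0 k g g de *m u 0%N k.
  move=> g de N H; rewrite (big_ord_widen N (fun k => Etab M x0 y0 k g g de *m u 0%N k) H).
  rewrite big_mkcond; apply: eq_bigr => k _; case: ifP => // Hk.
  by rewrite E_zero ?mul0mx // ltnNge -ltnS Hk.
suff: forall N al, (al <= N)%N -> forall be, (al + be <= h)%N ->
    u al be = \sum_(k < (al + be).+1) Etab M x0 y0 k al al be *m u 0%N k.
  move=> H al be Hab; rewrite (H al al (leqnn al) be Hab).
  by apply: eq_bigr => k _; rewrite EE // -ltnS.
elim=> [|N IH] al.
  rewrite leqn0 => /eqP -> be _ /=.
  under eq_bigr => k _ do rewrite /= mul_scalar_mx.
  rewrite (bigD1 (Ordinal (ltnSn be))) //= eqxx scale1r big1 ?addr0 //.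
  move=> k /eqP Hk; rewrite (_ : (k == be :> nat) = false) ?scale0r //.
  by apply/negP => /eqP Hk'; apply: Hk; apply: val_inj.
rewrite leq_eqVlt => /orP [/eqP ->|]; last by rewrite ltnS; exact: IH.
move=> be Hab.
have Hlt : (N + be < h)%N by rewrite -addSn.
have Heq := hu _ _ Hlt.
have -> : u N.+1 be = - (J0 R n *m Iup0 R n) *m u N be.+1 +
   \sum_(g < N.+1) \sum_(de < be.+1) (J0 R n *m Mbin M x0 y0 N be g de) *m u g de.
  rewrite -[u N.+1 be]mul1mx -J0Ilow0 -mulmxA.
  have -> : Ilow0 R n *m u N.+1 be = \sum_(g < N.+1) \sum_(de < be.+1) Mbin M x0 y0 N be g de *m u g de - Iup0 R n *m u N be.+1.
    by rewrite -Heq addrK.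
  rewrite mulmxDr addrC mulmxN mulNmx mulmxA; congr (_ + _).
  rewrite mulmx_sumr; apply: eq_bigr => g _; rewrite mulmx_sumr; apply: eq_bigr => de _.
  by rewrite mulmxA.
have Hk : forall k : 'I_(N.+1 + be).+1, (N.+1 + be < k)%N = false.
  by move=> k; rewrite ltnNge -ltnS ltn_ord.
under [RHS]eq_bigr => k _ do rewrite Etab_succ Hk.
under [RHS]eq_bigr => k _ do rewrite mulmxDl mulmx_suml.
rewrite big_split /=; congr (_ + _).
  rewrite (IH N (leqnn N) be.+1); last by rewrite addnS.
  rewrite addnS addSn mulmx_sumr; apply: eq_bigr => k _.
  by rewrite !mulmxA.
rewrite [RHS]exchange_big /=; apply: eq_bigr => g _.
under [RHS]eq_bigr => k _ do rewrite mulmx_suml.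
rewrite [RHS]exchange_big /=; apply: eq_bigr => de _.
have Hg : (g <= N)%N by rewrite -ltnS ltn_ord.
have Hde : (de <= be)%N by rewrite -ltnS ltn_ord.
have Hgd : (g + de <= h)%N.
  by apply: leq_trans Hab; apply: leq_add => //; apply: leqW.
rewrite (IH g Hg de Hgd).
rewrite (widen g de (N.+1 + be).+1); last by rewrite ltnS; apply: leq_add => //; apply: leqW.
rewrite mulmx_sumr; apply: eq_bigr => k _.
by rewrite !mulmxA.
Qed.
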